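(* Let $\mathbb{V}$ be the variety in the language consisting of one binary operation symbol $*$ and two constant symbols $p$ and $0$, defined by the laws (writing $a*b*c$ for $(a*b)*c$) $$0*x = x*0 = 0,\qquad x*y*z = x*z*y,\qquad x*(y*z) = 0,\qquad x*y*y = 0.$$ Then for every integer $n \ge 0$, the free algebra in $\mathbb{V}$ on $n$ free generators has exactly $1 + (n+1)\cdot 2^{n+1}$ elements. In particular, $\mathbb{V}$ is locally finite. *)

(* Defs.v *)
From mathcomp Require Import all_boot.
Set Implicit Arguments. Unset Strict Implicit. Unset Printing Implicit Defensive.

Inductive term (n : nat) : Type :=
  | Var : 'I_n -> term n
  | Pc : term n
  | Zc : term n
  | Op : term n -> term n -> term n.

Arguments Pc {n}. Arguments Zc {n}.

(* The smallest congruence on term n containing every instance of the laws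
   of V:  0*x = 0, x*0 = 0, (x*y)*z = (x*z)*y, x*(y*z) = 0, (x*y)*y = 0.
   (This is the fully invariant congruence generated by the laws; by
   Birkhoff, term n / veq n is the free V-algebra on n generators.) *)
Inductive veq (n : nat) : term n -> term n -> Prop :=
  | veq_refl t : veq t t
  | veq_sym s t : veq s t -> veq t s
  | veq_trans s t u : veq s t -> veq t u -> veq s u
  | veq_op s s' t t' : veq s s' -> veq t t' -> veq (Op s t) (Op s' t')
  | veq_zl x : veq (Op Zc x) Zc
  | veq_zr x : veq (Op x Zc) Zc
  | veq_comm x y z : veq (Op (Op x y) z) (Op (Op x z) y)
  | veq_right x y z : veq (Op x (Op y z)) Zc
  | veq_sq x y : veq (Op (Op x y) y) Zc.

Definition free_algebra_card (n N : nat) : Prop :=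
  exists f : 'I_N -> term n,
    (forall i j, veq (f i) (f j) -> i = j) /\
    (forall t : term n, exists i, veq t (f i)).

(* Main.v *)
Require Import Defs.
From mathcomp Require Import all_boot.

Section Proof.
Variable n : nat.
Local Notation A := 'I_n.+1.
Local Notation M := (option (A * {set A})%type).

Definition mulM (u v : M) : M :=
  match u, v with
  | Some (h, X), Some (a, Y) =>
      if (Y == set0) && (a \notin X) then Some (h, a |: X) else None
  | _, _ => None
  end.

Fixpoint eval (t : term n) : M :=
  match t with
  | Var i => Some (widen_ord (leqnSn n) i, set0)
  | Pc => Some (ord_max, set0)
  | Zc => None
  | Op s t => mulM (eval s) (eval t)
  end.

Lemma ne0 (a : A) X : (a |: X == set0) = false.
Proof. apply/negbTE/set0Pn; exists a; exact: setU11. Qed.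

Lemma mulMN u : mulM u None = None.
Proof. by case: u => [[]|]. Qed.

Lemma eval_veq s t : veq s t -> eval s = eval t.
Proof.
move=> H; elim: H => //=.
- by move=> ? ? ? _ -> _ ->.
- by move=> ? ? ? ? _ -> _ ->.
- by move=> x; case: (eval x) => [[]|].
- move=> x y z; case: (eval x) => [[h X]|] //; case: (eval y) => [[a Y]|] //;
  case: (eval z) => [[b U]|] //=.
  case eY: (Y == set0); case eU: (U == set0); rewrite /= ?andbF //=;
  case aX: (a \in X); case bX: (b \in X); rewrite /= ?eY ?eU /= ?in_setU1 ?aX ?bX ?orbT ?orbF //=;
  case: (eqVneq b a) => [->|ne]; rewrite ?eqxx //=;
  try (by rewrite eq_sym (negbTE ne) /= ?setUCA);
  try (by rewrite (negbTE ne)).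
  all: try (by congr (Some (_, _)); apply/setP => w; rewrite !in_setU1 orbCA).
  all: try by rewrite mulMN.
- move=> x y z; case: (eval y) => [[a Y]|]; last by rewrite mulMN.
  case: (eval z) => [[b U]|]; last by rewrite /= mulMN.
  rewrite /=; case: ifP => _; last by rewrite mulMN.
  by case: (eval x) => [[h X]|] //=; rewrite ne0.
- move=> x y; case: (eval x) => [[h X]|] //; case: (eval y) => [[a Y]|] //=.
  case: ifP => //= _; by rewrite setU11 andbF.
Qed.

Definition atom (a : A) : term n :=
  match @insub nat (fun i => i < n) 'I_n (val a) with
  | Some i => Var i
  | None => Pc
  end.

Lemma eval_atom a : eval (atom a) = Some (a, set0).
Proof.
rewrite /atom; case: insubP => [i _ iE|].
  by congr (Some (_, _)); apply: val_inj; rewrite /= iE.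
rewrite -leqNgt => le; congr (Some (_, _)); apply: val_inj => /=.
by apply/eqP; rewrite eqn_leq le -ltnS ltn_ord.
Qed.

Definition F (x : term n) (l : seq A) : term n :=
  foldl (fun acc a => Op acc (atom a)) x l.

Lemma F_veq x y l : veq x y -> veq (F x l) (F y l).
Proof.
elim: l x y => //= a l IH x y H; apply: IH; apply: veq_op => //; exact: veq_refl.
Qed.

Lemma F_comm x l a : veq (Op (F x l) (atom a)) (F (Op x (atom a)) l).
Proof.
elim: l x => [|b l IH] x /=; first exact: veq_refl.
apply: veq_trans (IH _) _; apply: F_veq; exact: veq_comm.
Qed.

Lemma F_zero l : veq (F Zc l) Zc.
Proof.
elim: l => [|a l IH] /=; first exact: veq_refl.
apply: veq_trans _ IH; apply: F_veq; exact: veq_zl.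
Qed.

Lemma F_kill x l a : a \in l -> veq (F (Op x (atom a)) l) Zc.
Proof.
elim: l x => [|b l IH] x //=; rewrite in_cons; case: (eqVneq a b) => [<- _|_ /= al].
  apply: veq_trans (F_zero l); apply: F_veq; exact: veq_sq.
apply: veq_trans (IH (Op x (atom b)) al); apply: F_veq; exact: veq_comm.
Qed.

Lemma F_perm x l l' : perm_eq l l' -> veq (F x l) (F x l').
Proof.
elim: l x l' => [|a l IH] x l'.
  by rewrite perm_sym => /perm_nilP ->; exact: veq_refl.
move=> pe; have al : a \in l' by rewrite -(perm_mem pe) mem_head.
case/splitPr: al pe => l2 l3 pe.
have pe' : perm_eq l (l2 ++ l3).
  by rewrite -(perm_cons a); apply: perm_trans pe _; by rewrite -[a :: l3]cat1s perm_catCA.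
rewrite /F foldl_cat /= -/(F x l2) -/(F _ l3) -/(F _ l).
have H1 := @F_veq _ _ l3 (F_comm x l2 a).
apply: veq_trans (IH _ _ pe') _; apply: veq_sym; apply: veq_trans H1 _.
rewrite /F foldl_cat; exact: veq_refl.
Qed.

Definition nf (u : M) : term n :=
  match u with
  | None => Zc
  | Some (h, X) => F (atom h) (enum X)
  end.

Lemma eval_F x h X l : eval x = Some (h, X) -> uniq l -> [disjoint X & [pred y in l]] ->
  eval (F x l) = Some (h, X :|: [set y in l]).
Proof.
elim: l x X => [|a l IH] x X ex ul dis /=.
  by rewrite ex; congr (Some (_, _)); apply/setP => y; rewrite !inE orbF.
case/andP: ul => al ul.
have aS : a \notin X.
  by rewrite (disjointFl dis) //; exact: mem_head.
rewrite (IH _ (a |: X)) //=.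
- congr (Some (_, _)); apply/setP => y; rewrite !inE.
  by case: (y == a); case: (y \in X); case: (y \in l).
- by rewrite ex eval_atom /= aS andbT; case: eqP.
- apply/pred0P => y; rewrite !inE /=; apply/negbTE; apply/negP => /andP [].
  case/orP => [/eqP -> //|yS yl]; first by rewrite (negbTE al).
  by move: (pred0P dis y); rewrite !inE /= yS yl orbT.
Qed.

Lemma eval_nf u : eval (nf u) = u.
Proof.
case: u => [[h X]|] //=.
rewrite (@eval_F (atom h) h set0 (enum X) (eval_atom h) (enum_uniq _)); last first.
  by apply/pred0P => y; rewrite !inE.
by congr (Some (_, _)); apply/setP => y; rewrite !inE mem_enum.
Qed.

Lemma Op_nf u v : veq (Op (nf u) (nf v)) (nf (mulM u v)).
Proof.
case: u => [[h X]|]; last exact: veq_zl.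
case: v => [[a Y]|]; last exact: veq_zr.
rewrite /=; case: (eqVneq Y set0) => [->|Tn] /=; last first.
  have : enum Y != [::].
    apply/eqP => eT; case/set0Pn: Tn => y; by rewrite -mem_enum eT.
  case: (enum Y) => [|b l] // _ /=.
  apply: veq_trans (veq_op (veq_refl _) (veq_sym (F_comm _ _ _))) _.
  exact: veq_right.
have -> : enum (set0 : {set A}) = [::] by apply/eqP; rewrite -size_eq0 -cardE cards0.
rewrite /=; case: (boolP (a \in X)) => aS /=.
  apply: veq_trans (F_comm _ _ _) _; apply: F_kill; by rewrite mem_enum.
apply: veq_trans (F_comm _ _ _) _.
have : perm_eq (a :: enum X) (enum (a |: X)).
  apply: uniq_perm; rewrite /= ?enum_uniq ?mem_enum ?aS //.
  by move=> y; rewrite in_cons !mem_enum in_setU1.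
exact: F_perm.
Qed.

Lemma enum0 : enum (set0 : {set A}) = [::].
Proof. by apply/eqP; rewrite -size_eq0 -cardE cards0. Qed.

Lemma atom_widen i : atom (widen_ord (leqnSn n) i) = Var i.
Proof.
rewrite /atom; case: insubP => [j _ jE|]; first by congr Var; apply: val_inj; rewrite jE.
by rewrite /= ltn_ord.
Qed.

Lemma atom_max : atom ord_max = Pc.
Proof.
rewrite /atom; case: insubP => [j|] //=.
by rewrite ltnn.
Qed.

Lemma nf_eval t : veq t (nf (eval t)).
Proof.
elim: t => [i|||s IHs t IHt] /=.
- rewrite enum0 /= atom_widen; exact: veq_refl.
- rewrite enum0 /= atom_max; exact: veq_refl.
- exact: veq_refl.
- exact: veq_trans (veq_op IHs IHt) (Op_nf _ _).
Qed.

Lemma cardM : #|{: M}| = 1 + n.+1 * 2 ^ n.+1.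
Proof.
rewrite card_option card_prod card_ord add1n; congr (_ * _).+1.
rewrite -cardsT.
have -> : [set: {set A}] = powerset [set: A].
  by apply/setP => X; rewrite !inE subsetT.
by rewrite card_powerset cardsT card_ord.
Qed.

End Proof.

Theorem mainTheorem2 (n : nat) :
  free_algebra_card n (1 + n.+1 * 2 ^ n.+1).
Proof.
have E := cardM n.
exists (fun i => @nf n (enum_val (cast_ord (esym E) i))); split.
  move=> i j /eval_veq; rewrite !eval_nf => /enum_val_inj /cast_ord_inj //.
move=> t; exists (cast_ord E (enum_rank (@eval n t))).
by rewrite cast_ordK enum_rankK; exact: nf_eval.
Qed.
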